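(* Let $k\ge1$, $t\ge 2$, and let $Cat_{k,t-1}$ be a set of representatives of the $\sim_2$-equivalence classes of $[GL(k,2)]^{t-1}$. Let $\overline{S_t}$ be the set of codes generated by the matrices $(I_k\mid B)$ with $B\in Cat_{k,t-1}$. Then every code in $\overline{S_t}$ is a $t$-CIS $[tk,k]$ code, and every $t$-CIS $[tk,k]$ code is equivalent to some code in $\overline{S_t}$; hence, removing equivalent codes from $\overline{S_t}$ and keeping one representative of each equivalence class yields a set $S_t$ of representatives of all inequivalent $t$-CIS codes of dimension $k$.
   Context: A binary linear $[tk,k]$ code is $t$-CIS if its coordinate set can be partitioned into $t$ pairwise disjoint information sets, an information set being a set of $k$ coordinates whose columns in a generator matrix are linearly independent. Two codes are equivalent if one is obtained from the other by a permutation of coordinates. $[GL(k,2)]^{t-1}$ is the set of $k\times k(t-1)$ binary matrices $(A_1\mid\cdots\mid A_{t-1})$ with all $A_j\in GL(k,2)$. For $A,B\in[GL(k,2)]^{t-1}$, $A\sim_2B$ iff $A=P_kBP_{k(t-1)}$ for some $k\times k$ permutation matrix $P_k$ and some $k(t-1)\times k(t-1)$ permutation matrix $P_{k(t-1)}$. $I_k$ is the identity matrix. *)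

(* Defs.v *)
From HB Require Import structures.
From mathcomp Require Import all_boot all_order all_algebra all_fingroup.
Set Implicit Arguments. Unset Strict Implicit. Unset Printing Implicit Defensive.
Import GRing.Theory.
Local Open Scope ring_scope.

Definition code_of (k n : nat) (G : 'M['F_2]_(k, n)) : {set 'rV['F_2]_n} :=
  [set v : 'rV['F_2]_n | (v <= G)%MS].

Definition is_gen_mx (k n : nat) (G : 'M['F_2]_(k, n)) (C : {set 'rV['F_2]_n}) : Prop :=
  \rank G = k /\ C = code_of G.

Definition cols (k n : nat) (G : 'M['F_2]_(k, n)) (I : {set 'I_n}) : 'M['F_2]_(k, #|I|) :=
  \matrix_(i < k, j < #|I|) G i (enum_val j).

Definition info_set (k n : nat) (G : 'M['F_2]_(k, n)) (I : {set 'I_n}) : bool :=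
  (#|I| == k) && row_free (cols G I)^T.

Definition is_tCIS (t k n : nat) (C : {set 'rV['F_2]_n}) : Prop :=
  exists G : 'M['F_2]_(k, n), is_gen_mx G C /\
    exists P : 'I_t -> {set 'I_n},
      (forall i j, i != j -> [disjoint P i & P j]) /\
      \bigcup_(i < t) P i = [set: 'I_n] /\
      (forall i, info_set G (P i)).

Definition code_equiv (n : nat) (C D : {set 'rV['F_2]_n}) : Prop :=
  exists s : 'S_n, D = [set col_perm s v | v in C].

Lemma blk_idx_proof (m k : nat) (j : 'I_m) (l : 'I_k) : (j * k + l < m * k)%N.
Proof.
case: j => j hj; case: l => l hl /=.
have h1 : (j * k + l < j * k + k)%N by rewrite ltn_add2l.
apply: (leq_trans h1); have -> : (j * k + k = j.+1 * k)%N by rewrite mulSn addnC.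
by rewrite leq_mul2r hj orbT.
Qed.

Definition blk_idx (m k : nat) (j : 'I_m) (l : 'I_k) : 'I_(m * k) :=
  Ordinal (blk_idx_proof j l).

Definition blk (k m : nat) (B : 'M['F_2]_(k, m * k)) (j : 'I_m) : 'M['F_2]_k :=
  \matrix_(i < k, l < k) B i (blk_idx j l).

Definition in_GLpow (k m : nat) (B : 'M['F_2]_(k, m * k)) : bool :=
  [forall j : 'I_m, blk B j \in unitmx].

Definition sim2 (k m : nat) (A B : 'M['F_2]_(k, m * k)) : Prop :=
  exists (s : 'S_k) (s' : 'S_(m * k)), A = perm_mx s *m B *m perm_mx s'.

Definition sim2_reps (k m : nat) (Cat : {set 'M['F_2]_(k, m * k)}) : Prop :=
  (forall B, B \in Cat -> in_GLpow B) /\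
  (forall A B, A \in Cat -> B \in Cat -> sim2 A B -> A = B) /\
  (forall A, in_GLpow A -> exists2 B, B \in Cat & sim2 A B).

(* \overline{S_t}: codes generated by (I_k | B), B in Cat; length k + (t-1)k = tk. *)
Definition Sbar (k m : nat) (Cat : {set 'M['F_2]_(k, m * k)}) : {set {set 'rV['F_2]_(k + m * k)}} :=
  [set code_of (row_mx 1%:M B) | B in Cat].

(* Main.v *)
Require Import Defs.
From mathcomp Require Import all_boot all_order all_algebra all_fingroup zify.
Set Implicit Arguments. Unset Strict Implicit. Unset Printing Implicit Defensive.
Import GRing.Theory.
Local Open Scope ring_scope.

Lemma colsub_sub k p q (M : 'M['F_2]_(k,p)) (N : 'M['F_2]_(k,q)) :
  (forall c, exists l, forall i, M i c = N i l) -> (M^T <= N^T)%MS.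
Proof.
move=> H; apply/row_subP => c; have [l Hl] := H c.
have -> : row c M^T = row l N^T by apply/rowP => i; rewrite !mxE Hl.
exact: row_sub.
Qed.

Lemma info_of_unit k n (G : 'M['F_2]_(k,n)) (I : {set 'I_n}) (N : 'M['F_2]_k) :
  #|I| = k -> N \in unitmx -> (forall l, exists c, forall i, N i l = cols G I i c) ->
  info_set G I.
Proof.
move=> HI HN H; apply/andP; split; first by rewrite HI.
rewrite /row_free.
have h1 := mxrankS (colsub_sub H).
rewrite mxrank_tr mxrank_unit // in h1.
have h2 := rank_leq_row (cols G I)^T.
rewrite eqn_leq h2 /=; apply: leq_trans h1; by rewrite HI.
Qed.

Lemma unit_of_info k n (G : 'M['F_2]_(k,n)) (I : {set 'I_n}) (N : 'M['F_2]_k) :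
  info_set G I -> (forall c, exists l, forall i, cols G I i c = N i l) ->
  N \in unitmx.
Proof.
move=> /andP[/eqP HI Hf] H.
have h1 := mxrankS (colsub_sub H).
move: Hf; rewrite /row_free => /eqP Hr; rewrite Hr HI in h1.
rewrite -unitmx_tr -row_free_unit /row_free eqn_leq rank_leq_row /=.
by rewrite mxrank_tr -(mxrank_tr N).
Qed.

Lemma code_ofMl k n (M : 'M['F_2]_k) (X : 'M['F_2]_(k,n)) :
  M \in unitmx -> code_of (M *m X) = code_of X.
Proof.
move=> HM; apply/setP => v; rewrite !inE.
by rewrite (eqmxMfull X _) // row_full_unit.
Qed.

Lemma code_of_perm k n (r : 'S_n) (X : 'M['F_2]_(k,n)) :
  code_of (col_perm r X) = [set col_perm r v | v in code_of X].
Proof.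
apply/setP => w; rewrite inE; apply/idP/imsetP.
  move=> Hw; exists (col_perm r^-1 w); last by rewrite -col_permM mulgV col_perm1.
  rewrite inE; have := submxMr (perm_mx r) Hw.
  by rewrite col_permE -mulmxA -perm_mxM mulVg perm_mx1 mulmx1 col_permE invgK.
move=> [v]; rewrite inE => Hv ->; rewrite !col_permE; exact: submxMr.
Qed.

Lemma col_perm_row k p q (a : 'S_p) (b : 'S_q) :
  exists r : 'S_(p + q), forall (X : 'M['F_2]_(k,p)) (Y : 'M['F_2]_(k,q)),
    col_perm r (row_mx X Y) = row_mx (col_perm a X) (col_perm b Y).
Proof.
pose f x := match split x with inl i => lshift q (a i) | inr j => rshift p (b j) end.
have fi : injective f.
  move=> x y; rewrite /f -{2}(splitK x) -{2}(splitK y).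
  case: (split x) => [i|i]; case: (split y) => [j|j] /= => E.
  - by move/lshift_inj: E => /perm_inj ->.
  - by move/eqP: E; rewrite eq_lrshift.
  - by move/eqP: E; rewrite eq_rlshift.
  - by move/rshift_inj: E => /perm_inj ->.
exists (perm fi) => X Y; apply/matrixP => i x; rewrite mxE permE /f.
rewrite -(splitK x); case: (split x) => [j|j]; rewrite unsplitK /=.
  by rewrite !row_mxEl mxE.
by rewrite !row_mxEr mxE.
Qed.
Lemma imK n (a b : 'S_n) (C : {set 'rV['F_2]_n}) :
  [set col_perm a w | w in [set col_perm b v | v in C]] = [set col_perm (a * b) v | v in C].
Proof. by rewrite -imset_comp; apply: eq_imset => v; rewrite /= col_permM. Qed.

Lemma im1 n (C : {set 'rV['F_2]_n}) : [set col_perm 1 v | v in C] = C.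
Proof. rewrite (eq_imset (g := id)) ?imset_id // => v; exact: col_perm1. Qed.

Lemma blkMl k m (A : 'M['F_2]_k) (B : 'M['F_2]_(k, m * k)) j :
  blk (A *m B) j = A *m blk B j.
Proof. apply/matrixP => i l; rewrite !mxE; apply: eq_bigr => r _; by rewrite !mxE. Qed.

Section Idx.
Variables (k m : nat) (hk : (0 < k)%N).
Local Notation n := (k + m * k)%N.

Lemma g_proof (j : 'I_m.+1) (l : 'I_k) : (j * k + l < k + m * k)%N.
Proof. have := ltn_ord j; have := ltn_ord l; nia. Qed.
Definition g j l : 'I_n := Ordinal (g_proof j l).
Lemma dj_proof (x : 'I_n) : (x %/ k < m.+1)%N.
Proof. rewrite ltn_divLR // mulSn; exact: ltn_ord. Qed.
Definition dj x : 'I_m.+1 := Ordinal (dj_proof x).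
Definition dl (x : 'I_n) : 'I_k := Ordinal (ltn_pmod x hk).
Lemma gd x : g (dj x) (dl x) = x.
Proof. by apply: val_inj => /=; rewrite -divn_eq. Qed.
Lemma djg j l : dj (g j l) = j.
Proof. by apply: val_inj => /=; rewrite divnMDl // divn_small // addn0. Qed.
Lemma dlg j l : dl (g j l) = l.
Proof. by apply: val_inj => /=; rewrite modnMDl modn_small. Qed.
Lemma g_inj j l j' l' : g j l = g j' l' -> j = j' /\ l = l'.
Proof. by move=> E; split; [rewrite -(djg j l) E djg | rewrite -(dlg j l) E dlg]. Qed.
Lemma g0 l : g ord0 l = lshift (m * k) l.
Proof. by apply: val_inj => /=; rewrite mul0n add0n. Qed.
Lemma gS (j : 'I_m) l : g (lift ord0 j) l = rshift k (blk_idx j l).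
Proof. by apply: val_inj => /=; rewrite /bump /= add1n mulSn addnA. Qed.

Lemma part1 (B : 'M['F_2]_(k, m * k)) : in_GLpow B -> is_tCIS m.+1 k (code_of (row_mx 1%:M B)).
Proof.
move=> /forallP HB; exists (row_mx 1%:M B); split.
  split => //; apply/eqP; rewrite eqn_leq rank_leq_row /=.
  have E : row_mx 1%:M B *m col_mx 1%:M 0 = 1%:M by rewrite mul_row_col mulmx1 mulmx0 addr0.
  apply: leq_trans (mxrankM_maxl (row_mx 1%:M B) (col_mx (1%:M : 'M['F_2]_k) 0)); by rewrite E mxrank1.
exists (fun j => [set g j l | l in 'I_k]); split; [|split].
- move=> i j Nij; rewrite -setI_eq0; apply/eqP/setP => x; rewrite !inE.
  apply/negP => /andP[/imsetP[l _ ->] /imsetP[l' _ /g_inj[Eij _]]].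
  by rewrite Eij eqxx in Nij.
- apply/setP => x; rewrite inE; apply/bigcupP; exists (dj x) => //.
  by apply/imsetP; exists (dl x) => //; rewrite gd.
move=> j; apply: (@info_of_unit _ _ _ _ (\matrix_(i, l) row_mx 1%:M B i (g j l))).
- by rewrite card_imset ?card_ord // => l l' /g_inj[].
- case: (unliftP ord0 j) => [j'|] ->.
    have -> : \matrix_(i, l) row_mx 1%:M B i (g (lift ord0 j') l) = blk B j'.
      by apply/matrixP => i l; rewrite [LHS]mxE gS row_mxEr mxE.
    exact: (HB j').
  have -> : \matrix_(i, l) row_mx 1%:M B i (g ord0 l) = 1%:M.
    by apply/matrixP => i l; rewrite [LHS]mxE g0 row_mxEl.
  exact: unitmx1.
move=> l.
have Hin : g j l \in [set g j l0 | l0 in 'I_k] by apply: imset_f.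
exists (enum_rank_in Hin (g j l)) => i; rewrite !mxE enum_rankK_in //.
Qed.

Lemma part2 (G : 'M['F_2]_(k, n)) (P : 'I_m.+1 -> {set 'I_n}) :
  (forall i j, i != j -> [disjoint P i & P j]) -> (forall i, info_set G (P i)) ->
  exists s : 'S_n, exists A0 : 'M['F_2]_k, exists B1 : 'M['F_2]_(k, m * k),
    [/\ col_perm s G = row_mx A0 B1, A0 \in unitmx & forall j, blk B1 j \in unitmx].
Proof.
move=> Hd Hinfo.
have x0 : 'I_n by exists 0%N; rewrite addn_gt0 hk.
have Hc j : #|P j| = k by have /andP[/eqP] := Hinfo j.
pose e j (l : 'I_k) := nth x0 (enum (P j)) l.
have He j l : e j l \in P j.
  by rewrite -mem_enum; apply: mem_nth; rewrite -cardE Hc.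
pose sf x := e (dj x) (dl x).
have sfi : injective sf.
  move=> x y E.
  have Hx := He (dj x) (dl x); have Hy := He (dj y) (dl y).
  rewrite -/(sf x) -/(sf y) -E in Hy Hx.
  case: (eqVneq (dj x) (dj y)) => [Ej|Nj]; last by rewrite (disjointFr (Hd _ _ Nj) Hx) in Hy.
  move: E; rewrite /sf /e Ej => /eqP; rewrite nth_uniq ?enum_uniq // -?cardE ?Hc // => /eqP El.
  by rewrite -(gd x) -(gd y) Ej (val_inj El).
pose s := perm sfi.
have Hs i j l : col_perm s G i (g j l) = G i (e j l).
  by rewrite mxE permE /sf djg dlg.
have Hcol j (c : 'I_#|P j|) : exists l, forall i, cols G (P j) i c = G i (e j l).
  have cl : (c < k)%N by have := ltn_ord c; rewrite {2}(Hc j).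
  by exists (Ordinal cl) => i; rewrite mxE (enum_val_nth x0).
exists s, (lsubmx (col_perm s G)), (rsubmx (col_perm s G)); split.
- by rewrite hsubmxK.
- apply: (unit_of_info (Hinfo ord0)) => c; have [l Hl] := Hcol ord0 c.
  by exists l => i; rewrite Hl mxE -g0 Hs.
move=> j; apply: (unit_of_info (Hinfo (lift ord0 j))) => c.
have [l Hl] := Hcol (lift ord0 j) c.
by exists l => i; rewrite Hl [RHS]mxE [RHS]mxE -gS Hs.
Qed.

End Idx.

Definition eqvb n (C D : {set 'rV['F_2]_n}) : bool :=
  [exists s : 'S_n, D == [set col_perm s v | v in C]].

Lemma eqvbP n (C D : {set 'rV['F_2]_n}) : reflect (code_equiv C D) (eqvb C D).
Proof.
apply: (iffP existsP) => [[s /eqP E]|[s E]]; exists s; first by [].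
by apply/eqP.
Qed.

Lemma eqv_refl n (C : {set 'rV['F_2]_n}) : code_equiv C C.
Proof. by exists 1%g; rewrite im1. Qed.

Lemma eqv_sym n (C D : {set 'rV['F_2]_n}) : code_equiv C D -> code_equiv D C.
Proof. by move=> [s ->]; exists s^-1%g; rewrite imK mulVg im1. Qed.

Lemma eqv_trans n (C D E : {set 'rV['F_2]_n}) :
  code_equiv C D -> code_equiv D E -> code_equiv C E.
Proof. by move=> [s ->] [r ->]; exists (r * s)%g; rewrite imK. Qed.

Lemma main_part2 k m (hk : (0 < k)%N) (Cat : {set 'M['F_2]_(k, m * k)}) (hCat : sim2_reps Cat)
  (C : {set 'rV['F_2]_(k + m * k)}) :
  is_tCIS m.+1 k C -> exists2 D, D \in Sbar Cat & code_equiv C D.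
Proof.
case: hCat => _ [_ Hrep].
move=> [G [[_ ->] [P [Hd [_ Hinfo]]]]].
have [s [A0 [B1 [Es HA0 HB1]]]] := part2 hk Hd Hinfo.
pose B' := invmx A0 *m B1.
have HB' : in_GLpow B'.
  by apply/forallP => j; rewrite /B' blkMl unitmx_mul unitmx_inv HA0 HB1.
have [B HB [p [q EB]]] := Hrep _ HB'.
exists (code_of (row_mx 1%:M B)); first by apply: imset_f.
have [r Hr] := col_perm_row k p q^-1.
have E1 : [set col_perm s v | v in code_of G] = [set col_perm r v | v in code_of (row_mx 1%:M B)].
  have HiA : invmx A0 \in unitmx by rewrite unitmx_inv.
  rewrite -!code_of_perm Hr Es -(@code_ofMl _ _ _ _ HiA) mul_mx_row mulVmx //.
  rewrite -/B' EB.
  rewrite -(@code_ofMl _ _ (perm_mx p^-1) _ (unitmx_perm _ _)) mul_mx_row mulmx1 !mulmxA.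
  by rewrite -perm_mxM mulVg perm_mx1 mul1mx !col_permE invgK mul1mx.
apply: (eqv_trans (D := [set col_perm s v | v in code_of G])); first by exists s.
by apply: eqv_sym; exists r.
Qed.

Lemma main_m k m (hk : (1 <= k)%N)
  (Cat : {set 'M['F_2]_(k, m * k)}) (hCat : sim2_reps Cat) :
  (forall C, C \in Sbar Cat -> is_tCIS m.+1 k C) /\
  (forall C : {set 'rV['F_2]_(k + m * k)},
     is_tCIS m.+1 k C -> exists2 D, D \in Sbar Cat & code_equiv C D) /\
  (exists S : {set {set 'rV['F_2]_(k + m * k)}},
     S \subset Sbar Cat /\
     (forall C D, C \in S -> D \in S -> code_equiv C D -> C = D) /\
     (forall C, is_tCIS m.+1 k C -> exists2 D, D \in S & code_equiv C D)).
Proof.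
have P2 := main_part2 hk hCat.
split; [|split => //].
  move=> C /imsetP[B HB ->]; apply: part1 => //; by case: hCat => H _; apply: H.
pose SB := Sbar Cat.
pose rep D := odflt D [pick E in SB | eqvb D E].
have repP D : D \in SB -> rep D \in SB /\ code_equiv D (rep D).
  move=> HD; rewrite /rep; case: pickP => [E /andP[HE /eqvbP]|] //=.
  by move/(_ D); rewrite HD /=; move/negbT/eqvbP; case; exact: eqv_refl.
have repE D1 D2 : D2 \in SB -> code_equiv D1 D2 -> rep D1 = rep D2.
  move=> HD2 H12; rewrite /rep (@eq_pick _ _ [pred E | (E \in SB) && eqvb D2 E]).
    case: pickP => //= /(_ D2) /= /negbT; rewrite HD2 /= => /eqvbP []; exact: eqv_refl.
  move=> E /=; congr andb; apply/eqvbP/eqvbP => H.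
    exact: eqv_trans (eqv_sym H12) H.
  exact: eqv_trans H12 H.
exists [set rep D | D in SB]; split; [|split].
- by apply/subsetP => x /imsetP[D HD ->]; case: (repP D HD).
- move=> C D /imsetP[D1 H1 ->] /imsetP[D2 H2 ->] H; apply: repE => //.
  case: (repP _ H1) => _ E1; case: (repP _ H2) => _ E2.
  exact: eqv_trans E1 (eqv_trans H (eqv_sym E2)).
move=> C HC; have [D HD E] := P2 C HC.
exists (rep D); first by apply: imset_f.
by case: (repP _ HD) => _ E2; exact: eqv_trans E E2.
Qed.

Local Close Scope ring_scope.

Theorem proposition9 (k t : nat) (hk : (1 <= k)%N) (ht : (2 <= t)%N)
  (Cat : {set 'M['F_2]_(k, (t - 1) * k)}) (hCat : sim2_reps Cat) :
  (forall C, C \in Sbar Cat -> is_tCIS t k C) /\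
  (forall C : {set 'rV['F_2]_(k + (t - 1) * k)},
     is_tCIS t k C -> exists2 D, D \in Sbar Cat & code_equiv C D) /\
  (exists S : {set {set 'rV['F_2]_(k + (t - 1) * k)}},
     S \subset Sbar Cat /\
     (forall C D, C \in S -> D \in S -> code_equiv C D -> C = D) /\
     (forall C, is_tCIS t k C -> exists2 D, D \in S & code_equiv C D)).
Proof.
have Et : t = (t - 1)%N.+1 by lia.
move: (t - 1)%N Et Cat hCat => m Et Cat hCat; subst t.
exact: (main_m hk hCat).
Qed.
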